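(* Let $\mathbb{U}$ be the Urysohn space and $\mathcal{K}(\mathbb{U})$ the standard Borel space (with the Effros Borel structure) of closed subsets of $\mathbb{U}$. The set $\mathcal{ALC}\subseteq\mathcal{K}(\mathbb{U})$ of all closed subsets of $\mathbb{U}$ that are almost locally compact is a Borel subset of $\mathcal{K}(\mathbb{U})$.
   Context: A topological space is almost locally compact if it contains a dense locally compact subspace. *)

(* Defs.v *)
From HB Require Import structures.
From mathcomp Require Import all_boot all_order all_algebra.
From mathcomp Require Import all_classical all_reals all_analysis.
Set Implicit Arguments. Unset Strict Implicit. Unset Printing Implicit Defensive.
Import Order.TTheory GRing.Theory Num.Theory.
Local Open Scope classical_set_scope.
Local Open Scope ring_scope.

Definition separable_space {R : realType} (M : metricType R) : Prop :=
  exists D : set M, countable D /\ dense D.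

Definition complete_space {R : realType} (M : metricType R) : Prop :=
  forall F : set_system M, ProperFilter F -> cauchy F -> exists x : M, F --> x.

Definition isometric {R : realType} (M N : metricType R) (f : M -> N) : Prop :=
  forall x y : M, mdist (f x) (f y) = mdist x y.

Definition is_Urysohn_space {R : realType} (U : metricType R) : Prop :=
  [/\ complete_space U, separable_space U,
      (forall M : metricType R, separable_space M ->
         exists f : M -> U, isometric f) &
      (forall (A : set U) (f : U -> U), finite_set A ->
         (forall x y, A x -> A y -> mdist (f x) (f y) = mdist x y) ->
         exists g : U -> U, [/\ bijective g, isometric g &
                                forall x, A x -> g x = f x])].

Definition locally_compact_subspace {T : topologicalType} (A : set T) : Prop :=
  @locally_compact (subspace A) A.

Definition almost_locally_compact {T : topologicalType} (F : set T) : Prop :=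
  exists D : set T, [/\ D `<=` F, F `<=` closure D & locally_compact_subspace D].

Definition closed_sets (T : topologicalType) : set (set T) := [set F | closed F].

Definition effros_generators (T : topologicalType) : set (set (set T)) :=
  [set [set F | closed F /\ F `&` V !=set0] | V in [set V : set T | open V]].

Definition effros_borel (T : topologicalType) : set (set (set T)) :=
  <<s @closed_sets T, @effros_generators T >>.

Definition ALC (T : topologicalType) : set (set T) :=
  [set F | closed F /\ almost_locally_compact F].

(* Main.v *)
Require Import Defs.
From HB Require Import structures.
From mathcomp Require Import all_boot all_order all_algebra.
From mathcomp Require Import all_classical all_reals all_analysis.
Set Implicit Arguments. Unset Strict Implicit. Unset Printing Implicit Defensive.
Import Order.TTheory GRing.Theory Num.Theory.
Local Open Scope classical_set_scope.
Local Open Scope ring_scope.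

Section SigmaStuff.
Variable T : topologicalType.
Let cl := @closed_sets T.
Let S := @effros_borel T.

Lemma S_sigma : sigma_algebra cl S.
Proof. exact: smallest_sigma_algebra. Qed.

Lemma S_sub A : S A -> A `<=` cl.
Proof.
move=> SA; suff : [set A | S A /\ A `<=` cl] A by case.
apply: (smallest_sub _ _ SA).
- have [S0 SD SU] := S_sigma.
  split.
  + by split => //.
  + move=> B [SB _]; split; [exact: SD| by move=> x []].
  + move=> B hB; split; first by apply: SU => n; case: (hB n).
    by move=> x [n _ Bx]; case: (hB n) => _; apply.
- move=> B gB; split; first exact: sub_sigma_algebra.
  by case: gB => V _ <- F [].
Qed.

Lemma S_D A : S A -> S (cl `\` A).
Proof. by have [_ SD _] := S_sigma; apply: SD. Qed.

Lemma S_U (A : nat -> set (set T)) : (forall n, S (A n)) -> S (\bigcup_n A n).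
Proof. by have [_ _ SU] := S_sigma; apply: SU. Qed.

Lemma S_I (A : nat -> set (set T)) : (forall n, S (A n)) -> S (\bigcap_n A n).
Proof.
move=> hA.
have -> : \bigcap_n A n = cl `\` \bigcup_n (cl `\` A n).
  apply/seteqP; split => F.
    move=> hF; split; first exact: (S_sub (hA 0%N)) (hF 0%N I).
    by move=> [n _ [_]]; apply; apply: hF.
  move=> [clF hF] n _; apply: contrapT => nA; apply: hF; exists n => //.
by apply: S_D; apply: S_U => n; apply: S_D.
Qed.

Lemma S_U2 A B : S A -> S B -> S (A `|` B).
Proof.
move=> SA SB.
have -> : A `|` B = \bigcup_n (if n is 0%N then A else B).
  apply/seteqP; split => F.
    by case=> h; [exists 0%N | exists 1%N].
  by case=> -[|n] _ h; [left|right].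
by apply: S_U => -[|n].
Qed.

Lemma S_I2 A B : S A -> S B -> S (A `&` B).
Proof.
move=> SA SB.
have -> : A `&` B = \bigcap_n (if n is 0%N then A else B).
  apply/seteqP; split => F.
    by case=> h1 h2 [|n].
  by move=> h; split; [apply: (h 0%N) | apply: (h 1%N)].
by apply: S_I => -[|n].
Qed.

Lemma S_gen V : open V -> S [set F | closed F /\ F `&` V !=set0].
Proof. by move=> oV; apply: sub_sigma_algebra; exists V. Qed.

End SigmaStuff.

Section MetricStuff.
Variables (R : realType) (U : metricType R).

Lemma mball_open (x : U) (r : R) : open (ball x r).
Proof.
rewrite openE => y bxy; rewrite /interior -nbhs_ballE.
move: bxy; rewrite ballEmdist /= => bxy.
exists (r - mdist x y) => /=; first by rewrite subr_gt0.
move=> z; rewrite !ballEmdist /= => yz.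
rewrite (le_lt_trans (metric_triangle x y z))//.
by rewrite -ltrBrDl.
Qed.

Lemma cball_sub (x : U) (r : R) : 0 < r -> closed_ball x r `<=` ball x (r + r).
Proof.
move=> r0 z cz.
have /cz [y [bxy bzy]] : nbhs z (ball z r) by exact: nbhsx_ballx.
exact: (ball_triangle bxy (ball_sym bzy)).
Qed.

Lemma exists_small (e : R) : 0 < e -> exists m : nat, m.+1%:R^-1 < e.
Proof.
move=> e0.
have [N _ /(_ N)/(_ (leqnn _)) h] := near_infty_natSinv_lt (PosNum e0).
by exists N.
Qed.

End MetricStuff.
Definition pt_of {T : Type} (x : T) := T.
HB.instance Definition _ (T : topologicalType) (x : T) := Topological.copy (pt_of x) T.
HB.instance Definition _ (T : topologicalType) (x : T) := isPointed.Build (pt_of x) x.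

Lemma compact_cover_pt (T : topologicalType) (x : T) (A : set T) : compact A ->
  forall (I : choiceType) (D : set I) (f : I -> set T),
    (forall i, D i -> open (f i)) -> A `<=` \bigcup_(i in D) f i ->
    finite_subset_cover D f A.
Proof.
move=> cA.
have : @compact (pt_of x) A by [].
rewrite compact_cover => h I D f hof cov.
exact: (h I D f hof cov).
Qed.

Section Main.
Variables (R : realType) (U : metricType R) (e : nat -> U).
Hypothesis he : dense (range e).

Definition rr (m : nat) : R := (m.+1%:R)^-1.
Lemma rr_gt0 m : 0 < rr m. Proof. by rewrite /rr invr_gt0. Qed.

Definition BB n m := ball (e n) (rr m).
Lemma BB_open n m : open (BB n m). Proof. exact: mball_open. Qed.

Lemma basic (x : U) (O : set U) : nbhs x O -> exists n m, BB n m x /\ BB n m `<=` O.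
Proof.
move=> /nbhs_ballP [eps eps0 hO].
have [m hm] := exists_small (divr_gt0 eps0 (ltr0n R 2)).
have : ball x (rr m) `&` range e !=set0.
  apply: he; last exact: mball_open.
  by exists x; exact: ballxx (rr_gt0 m).
move=> [y0 [bx [n _ eny]]]; subst y0.
exists n, m; split; first exact: ball_sym.
move=> y hby; apply: hO.
apply: (@le_ball _ _ _ (rr m + rr m)); last exact: ball_triangle bx hby.
by rewrite [leRHS](splitr eps) ltW// ltrD.
Qed.

Definition CU (s : seq nat) (k : nat) : set U :=
  \big[setU/set0]_(i <- s) closed_ball (e i) (rr k).

Lemma CU_closed s k : closed (CU s k).
Proof. by apply: closed_bigsetU => i _; exact: closed_ball_closed. Qed.

Lemma CU_ultra (G : set_system U) s k : UltraFilter G -> G (CU s k) ->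
  exists i, G (closed_ball (e i) (rr k)).
Proof.
move=> GU; elim: s => [|i s IH].
  by rewrite /CU big_nil => /filter_ex [x []].
rewrite /CU big_cons => hG.
have [h|h] := in_ultra_setVsetC (closed_ball (e i) (rr k)) GU; first by exists i.
apply: IH; apply: filterS (filterI hG h).
by move=> y [[//|//] ].
Qed.

Lemma TB_compact (K : set U) : complete_space U -> closed K ->
  (forall k, exists s, K `<=` CU s k) -> compact K.
Proof.
move=> cU cK hK; rewrite compact_ultra => G GU GK.
have cG : cauchy G.
  apply: cauchy_exP => eps eps0.
  have [k hk] := exists_small (divr_gt0 eps0 (ltr0n R 2)).
  have [s hs] := hK k.
  have [i hi] := CU_ultra GU (filterS hs GK).
  exists (e i); apply: filterS hi.
  apply: subset_trans (cball_sub (rr_gt0 k)) _.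
  by apply: le_ball; rewrite [leRHS](splitr eps) ltW// ltrD.
have [x Gx] := cU G _ cG.
exists x; split => //.
apply: (@closed_cvg _ _ G _ id K cK _ x) => //=.
Qed.


Definition TB (F : set U) n' m' :=
  forall k, exists s, ~ (F `&` (BB n' m' `&` ~` CU s k) !=set0).

Definition Good (F : set U) := closed F /\ forall n m, F `&` BB n m !=set0 ->
  exists n' m', F `&` (BB n m `&` BB n' m') !=set0 /\ TB F n' m'.

Lemma CU_sup s k i : i \in s -> closed_ball (e i) (rr k) `<=` CU s k.
Proof.
elim: s => [//|j s IH]; rewrite inE => /orP [/eqP ->|h] z hz; rewrite /CU big_cons.
  by left.
by right; apply: IH.
Qed.

Lemma sub_nbhs (D : set U) x (K : set U) : D x ->
  within D (nbhs (x : subspace D)) K -> nbhs x [set y | D y -> K y].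
Proof.
move=> Dx.
have -> : nbhs (x : subspace D) = nbhs_subspace x by [].
rewrite -(nbhs_subspace_in Dx) => h.
apply: (@filterS _ (nbhs x) _ [set y | D y -> D y -> K y]).
  by move=> y /= h' Dy; apply: h'.
exact: h.
Qed.

Lemma nbhs_sub (D : set U) x (K : set U) : D x ->
  nbhs x [set y | D y -> K y] -> within D (nbhs (x : subspace D)) K.
Proof.
move=> Dx h.
have -> : nbhs (x : subspace D) = nbhs_subspace x by [].
rewrite -(nbhs_subspace_in Dx).
apply: (@filterS _ (nbhs x) _ [set y | D y -> D y -> K y]); last first.
  by apply: filterS h => y /= h' Dy _; apply: h'.
by move=> y /= h'.
Qed.

Lemma ALC_Good (F : set U) : closed F -> almost_locally_compact F -> Good F.
Proof.
move=> cF [D [DF FD lcD]]; split => // n m [y [Fy By]].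
have [x [Dx Bx]] : D `&` BB n m !=set0.
  apply: (FD y Fy (BB n m)); apply: open_nbhs_nbhs; split => //; exact: BB_open.
have := lcD x Dx; rewrite /compact_near => -[K hK [cK clK]].
have hK3 := sub_nbhs Dx hK.
move/nbhs_ballP: hK3 => [eps eps0 hball].
have cK' : compact (K `&` D : set U).
  apply/compact_subspaceIP; apply: compact_closedI => //.
  exact: closed_subspaceT.
have clK' : closed (K `&` D : set U).
  exact: compact_closed (@metric_hausdorff _ _) cK'.
have [n' [m' [Bx' BO]]] : exists n' m', BB n' m' x /\ BB n' m' `<=` ball x eps `&` BB n m.
  apply: basic; apply: filterI; first exact: nbhsx_ballx.
  by apply: open_nbhs_nbhs; split => //; exact: BB_open.
exists n', m'; split.
  by exists x; split; [exact: DF | split].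
have sub : F `&` BB n' m' `<=` K `&` D.
  move=> z [Fz Bz]; apply: contrapT => nK.
  have : D `&` (~` (K `&` D) `&` BB n' m') !=set0.
    apply: (FD z Fz); apply: open_nbhs_nbhs; split => //.
    by apply: openI; [exact: closed_openC | exact: BB_open].
  move=> [d [Dd [nKd Bd]]]; apply: nKd; split => //.
  by apply: hball => //; have [] := BO d Bd.
move=> k.
have cov : K `&` D `<=` \bigcup_(i in [set: nat]) ball (e i) (rr k).
  move=> z _.
  have [w [bzw [i _ eiw]]] : ball (z : U) (rr k) `&` range e !=set0.
    apply: he; last exact: mball_open.
    by exists z; exact: ballxx (rr_gt0 k).
  by exists i => //; rewrite eiw; exact: ball_sym.
have [D' _ hD'] := @compact_cover_pt _ x _ cK' nat [set: nat] (fun i => ball (e i) (rr k)) (fun i _ => mball_open (e i) (rr k)) cov.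
exists (finmap.enum_fset D') => -[z [Fz [Bz nC]]]; apply: nC.
have /hD' [i D'i bi] := sub z (conj Fz Bz).
by apply: (CU_sup D'i); exact: subset_closed_ball.
Qed.

Lemma Good_ALC (F : set U) : complete_space U -> Good F -> almost_locally_compact F.
Proof.
move=> cU [cF hG].
pose D := [set x | F x /\ exists n' m', BB n' m' x /\ TB F n' m'].
exists D; split.
- by move=> x [].
- move=> y Fy O nO.
  have [n [m [By BO]]] := basic nO.
  have [n' [m' [[x [Fx [Bx Bx']]] tb]]] := hG n m (ex_intro _ y (conj Fy By)).
  exists x; split; last exact: BO.
  by split => //; exists n', m'.
- move=> x Dx; rewrite /compact_near.
  have [Fx [n' [m' [Bx tb]]]] := Dx.
  have : nbhs (x : U) (BB n' m').
    by apply: open_nbhs_nbhs; split => //; exact: BB_open.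
  move/nbhs_ballP => [eps eps0 hball].
  pose K := F `&` closed_ball (x : U) (eps / 2).
  have KB : K `<=` F `&` BB n' m'.
    move=> z [Fz cz]; split => //; apply: hball.
    exact: (subset_closure_half eps0).
  have KD : K `<=` D.
    move=> z /KB [Fz Bz]; split => //; exists n', m'; split => //.
  have cK : compact K.
    apply: TB_compact => //; first by apply: closedI => //; exact: closed_ball_closed.
    move=> k; have [s hs] := tb k; exists s => z Kz; apply: contrapT => nC.
    apply: hs; exists z; have [Fz Bz] := KB z Kz; split => //.
  exists (K : set (subspace D)).
    apply: nbhs_sub => //.
    apply/nbhs_ballP; exists (eps / 2); first by rewrite /= divr_gt0.
    move=> z bz Dz; split; first by case: Dz.
    exact: subset_closed_ball.
  split.
    have -> : (K : set (subspace D)) = K `&` D by apply/esym/setIidl.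
    by apply/compact_subspaceIP; rewrite (setIidl KD).
  apply: closed_subspaceW; apply: closedI => //; exact: closed_ball_closed.
Qed.

Definition Gen (V : set U) : set (set U) := [set F | closed F /\ F `&` V !=set0].
Definition dec (j : nat) : seq nat := odflt [::] (unpickle j).

Definition Eset : set (set U) :=
  \bigcap_n \bigcap_m ((@closed_sets U `\` Gen (BB n m)) `|`
    \bigcup_n' \bigcup_m' (Gen (BB n m `&` BB n' m') `&`
       \bigcap_k \bigcup_j (@closed_sets U `\` Gen (BB n' m' `&` ~` CU (dec j) k)))).

Lemma Eset_Good : Eset = [set F | Good F].
Proof.
apply/seteqP; split => F.
- move=> hE.
  have clF : closed F.
    by case: (hE 0%N I 0%N I) => [[]|[n' _ [m' _ [[]]]]].
  split => // n m hnm.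
  case: (hE n I m I) => [[_ nG]|[n' _ [m' _ [[_ g] htb]]]].
    by exfalso; apply: nG.
  exists n', m'; split => // k.
  have [j _ [_ nG]] := htb k I.
  by exists (dec j) => h; apply: nG.
- move=> [clF hG] n _ m _.
  have [h|h] := pselect (F `&` BB n m !=set0); last first.
    by left; split => // -[].
  right; have [n' [m' [g tb]]] := hG n m h.
  exists n' => //; exists m' => //; split => // k _.
  have [s hs] := tb k; exists (pickle s) => //.
  by split => // -[_]; rewrite /dec pickleK.
Qed.

Lemma Eset_borel : effros_borel Eset.
Proof.
apply: S_I => n; apply: S_I => m; apply: S_U2.
  by apply: S_D; apply: S_gen; exact: BB_open.
apply: S_U => n'; apply: S_U => m'; apply: S_I2.
  by apply: S_gen; apply: openI; exact: BB_open.
apply: S_I => k; apply: S_U => j; apply: S_D; apply: S_gen.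
by apply: openI; [exact: BB_open | apply: closed_openC; exact: CU_closed].
Qed.

End Main.

Theorem proposition3p7 (R : realType) (U : metricType R) :
  is_Urysohn_space U -> @effros_borel U (@ALC U).
Proof.
move=> [cU [Dd [cDd dDd]] _ _].
have [[x0 _]|nU] := pselect (exists x : U, True); last first.
  have -> : @ALC U = @closed_sets U `\` set0.
    apply/seteqP; split => F.
      by move=> [clF _]; split.
    move=> [clF _]; split => //; exists set0; split => //.
      by move=> z Fz; exfalso; apply: nU; exists z.
  apply: S_D; have [S0 _ _] := S_sigma U; exact: S0.
have [f finj] := countable_injP _ cDd.
pose e n := xget x0 [set x | Dd x /\ f x = n].
have he : dense (range e).
  move=> O O0 oO; have [z [Oz Dz]] := dDd O O0 oO.
  exists z; split => //; exists (f z) => //.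
  have [Dez fez] : Dd (e (f z)) /\ f (e (f z)) = f z.
    exact: (@xgetI _ x0 [set x | Dd x /\ f x = f z] z).
  by apply: finj => //; rewrite inE.
have -> : @ALC U = Eset e.
  rewrite Eset_Good //; apply/seteqP; split => F.
    by move=> [clF hF]; apply: ALC_Good.
  move=> hG; split; first by case: hG.
  exact: (Good_ALC he cU hG).
exact: Eset_borel.
Qed.
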